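(* In the setting described in the context, if $(g\circ h^a)_\sharp\mu=\mu$ for some $g\in\mathcal{G}$ and $a>0$, then $g_\star\nu=\nu$.
   Context: Let $(\mathcal{X},\Sigma)$ be a measurable space, $\Phi^t$ a flow on $\mathcal{X}$ (bijective measurable maps, $\Phi^{t_1}\circ\Phi^{t_2}=\Phi^{t_1+t_2}$, jointly measurable), $f_\sharp$ push-forward, $\mu$ an invariant probability measure ($\Phi^t_\sharp\mu=\mu$ for all $t$). Let $h^a$, $a>0$, be bijective measurable maps and $\mathcal{G}$ a group of bijective measurable maps of $\mathcal{X}$ with $h^{a_1}\circ h^{a_2}=h^{a_1a_2}$, $\Phi^t\circ g=g\circ\Phi^t$, $g\circ h^a=h^a\circ g$, $\Phi^t\circ h^a=h^a\circ\Phi^{t/a}$. $\mathcal{Y}\subset\mathcal{X}$ is a representative set: for every $x$ there is a unique $a=A(x)>0$ with $h^a(x)\in\mathcal{Y}$, $A$ measurable with $\int A\,d\mu<\infty$; $P(x)=h^{A(x)}(x)$. Standing assumption: $\int A\circ g\,d\mu<\infty$ for every $g\in\mathcal{G}$. For a measure $\rho$ and positive measurable $B$ with $0<\int B\,d\rho<\infty$, $\rho_B$ is the probability measure with $d\rho_B/d\rho=B/\int B\,d\rho$. $\nu=P_\sharp\mu_A$, and for $g\in\mathcal{G}$, $g_\star\nu=P_\sharp\big((g_\sharp\mu)_A\big)$ is the normalized measure associated with $g_\sharp\mu$ (equivalently $g_\star\nu=(P\circ g)_\sharp\nu_{A\circ g}$). *)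

(* Defs.v *)
From HB Require Import structures.
From mathcomp Require Import all_boot all_order all_algebra.
From mathcomp Require Import all_classical all_reals all_analysis.
Set Implicit Arguments. Unset Strict Implicit. Unset Printing Implicit Defensive.
Import Order.TTheory GRing.Theory Num.Theory.
Local Open Scope classical_set_scope.
Local Open Scope ring_scope.

(* Meaningful when
   0 < \int B d rho < +oo (which is assumed wherever it is used). *)
Definition normalized d (X : measurableType d) (R : realType)
  (rho : set X -> \bar R) (B : X -> R) : set X -> \bar R :=
  fun S => ((\int[rho]_(x in S) (B x)%:E) *
            ((fine (\int[rho]_x (B x)%:E))^-1)%:E)%E.

Definition reprP d (X : measurableType d) (R : realType)
  (h : R -> X -> X) (A : X -> R) : X -> X := fun x => h (A x) x.

Definition nu_of d (X : measurableType d) (R : realType)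
  (mu : set X -> \bar R) (h : R -> X -> X) (A : X -> R) : set X -> \bar R :=
  pushforward (normalized mu A) (reprP h A).

Definition gstar d (X : measurableType d) (R : realType)
  (mu : set X -> \bar R) (h : R -> X -> X) (A : X -> R) (g : X -> X)
  : set X -> \bar R :=
  pushforward (normalized (pushforward mu g) A) (reprP h A).

(* Main.v *)
Require Import Defs.
From HB Require Import structures.
From mathcomp Require Import all_boot all_order all_algebra.
From mathcomp Require Import all_classical all_reals all_analysis.
From mathcomp Require Import measurable_realfun.
Import Order.TTheory GRing.Theory Num.Theory.
Local Open Scope classical_set_scope.
Local Open Scope ring_scope.

Theorem corollary2 (d : measure_display) (X : measurableType d) (R : realType)
  (Phi : R -> X -> X) (mu : probability X R)
  (h : R -> X -> X) (G : set (X -> X)) (Y : set X) (A : X -> R)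
  (* flow *)
  (Phi_bij : forall t, bijective (Phi t))
  (Phi_meas : forall t, measurable_fun setT (Phi t))
  (Phi_add : forall t1 t2, Phi t1 \o Phi t2 = Phi (t1 + t2))
  (Phi_joint : measurable_fun setT (fun p : R * X => Phi p.1 p.2))
  (* invariance of mu *)
  (mu_inv : forall t S, measurable S -> pushforward mu (Phi t) S = mu S)
  (* the maps h^a, a > 0 *)
  (h_bij : forall a, 0 < a -> bijective (h a))
  (h_meas : forall a, 0 < a -> measurable_fun setT (h a))
  (h_mul : forall a1 a2, 0 < a1 -> 0 < a2 -> h a1 \o h a2 = h (a1 * a2))
  (* the group G *)
  (G_id : G id)
  (G_comp : forall g1 g2, G g1 -> G g2 -> G (g1 \o g2))
  (G_inv : forall g, G g -> exists2 g', G g' & cancel g g' /\ cancel g' g)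
  (G_meas : forall g, G g -> measurable_fun setT g)
  (* commutation relations *)
  (Phi_g : forall t g, G g -> Phi t \o g = g \o Phi t)
  (g_h : forall g a, G g -> 0 < a -> g \o h a = h a \o g)
  (Phi_h : forall t a, 0 < a -> Phi t \o h a = h a \o Phi (t / a))
  (* Y is a representative set, A(x) the unique a > 0 with h^a(x) in Y *)
  (A_pos : forall x, 0 < A x)
  (A_Y : forall x, Y (h (A x) x))
  (A_uniq : forall x a, 0 < a -> Y (h a x) -> a = A x)
  (A_meas : measurable_fun setT A)
  (A_int : (\int[mu]_x (A x)%:E < +oo)%E)
  (* P is measurable (implicit in P_# ) *)
  (P_meas : measurable_fun setT (reprP h A))
  (* standing assumption *)
  (AG_int : forall g, G g -> (\int[mu]_x (A (g x))%:E < +oo)%E) :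
  forall (g : X -> X) (a : R), G g -> 0 < a ->
  (forall S, measurable S -> pushforward mu (g \o h a) S = mu S) ->
  forall S, measurable S -> gstar mu h A g S = nu_of mu h A S.
Proof.
move=> g a Gg a0 ginv S mS.
have mg := G_meas _ Gg.
have mgh : measurable_fun setT (g \o h a) by apply: measurableT_comp => //; exact: h_meas.
have Ah y : A (h a y) * a = A y.
  apply: A_uniq; first by rewrite mulr_gt0.
  by rewrite -(h_mul _ _ (A_pos _) a0); exact: A_Y.
have Ph y : reprP h A (h a y) = reprP h A y.
  rewrite /reprP; have := h_mul _ _ (A_pos (h a y)) a0.
  by move/(congr1 (fun f => f y)) => /= ->; rewrite Ah.
have claim T : measurable T -> (forall y, T (h a y) = T y) ->
    (\int[pushforward mu g]_(x in T) (A x)%:E =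
     a%:E * \int[mu]_(x in T) (A x)%:E)%E.
  move=> mT Tinv.
  have mA : measurable_fun T (EFin \o A).
    by apply/measurable_EFinP; exact: measurable_funTS.
  have A0 : {in T, forall y, (0 <= (A y)%:E)%E}.
    by move=> y _; rewrite lee_fin ltW.
  rewrite (@ge0_integral_pushforward _ _ _ _ _ g mg mu _ _ mT mA A0).
  rewrite (@eq_measure_integral _ _ _ T (pushforward mu (g \o h a)) mu); last first.
    move=> B mB _; by symmetry; apply: ginv.
  rewrite (@ge0_integral_pushforward _ _ _ _ _ _ mgh mu _ _ mT mA A0).
  have -> : (g \o h a) @^-1` T = g @^-1` T.
    apply/funext => x /=; rewrite -[g (h a x)]/((g \o h a) x) (g_h _ _ Gg a0) /=.
    by rewrite Tinv.
  rewrite (@eq_integral _ _ _ mu _ (fun x => (a^-1%:E * (A (g x))%:E)%E) ((EFin \o A) \o (g \o h a))); last first.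
    move=> x _ /=; rewrite -[g (h a x)]/((g \o h a) x) (g_h _ _ Gg a0) /= -EFinM.
    by congr EFin; rewrite -(Ah (g x)) (mulrC _ a) mulKf // gt_eqF.
  have mgT : measurable (g @^-1` T) by rewrite -[_ @^-1` _]setTI; exact: mg.
  rewrite ge0_integralZl_EFin //.
  - by rewrite muleA -EFinM mulfV ?gt_eqF // mul1e.
  - by move=> x _; rewrite lee_fin ltW.
  - by apply/measurable_EFinP; apply: measurable_funTS; exact: measurableT_comp.
  - by rewrite invr_ge0 ltW.
have mPS : measurable (reprP h A @^-1` S).
  by rewrite -[_ @^-1` _]setTI; exact: P_meas.
rewrite /gstar /nu_of /normalized.
have E (m : set X -> \bar R) (f : X -> X) (B : set X) : pushforward m f B = m (f @^-1` B) by [].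
rewrite !E.
rewrite (claim _ mPS); last by move=> y /=; rewrite Ph.
rewrite (claim _ measurableT) //.
have [r Dr] : exists r, (\int[mu]_x (A x)%:E = r%:E)%E.
  exists (fine (\int[mu]_x (A x)%:E)); rewrite fineK // ge0_fin_numE //.
  by apply: integral_ge0 => x _; rewrite lee_fin ltW.
rewrite Dr -EFinM /= invfM EFinM (muleC a%:E) -muleA. by rewrite -(EFinM a^-1) -EFinM mulVKf // gt_eqF.
Qed.
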